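(* Let $E$ be a Banach $f$-algebra and let $(x_n)$ be a sequence in $E$ which is disjoint ($|x_n|\wedge|x_m|=0$ for $n\neq m$) and decreasing. Then $x_n\xrightarrow{mw}0$.
   Context: All vector lattices are real and Archimedean. An $f$-algebra is a vector lattice with an associative multiplication making it an algebra, such that products of positive elements are positive and $x\wedge y=0$ implies $(xz)\wedge y=(zx)\wedge y=0$ for all $z\ge0$. A Banach $f$-algebra is an $f$-algebra which is a Banach lattice with $\|xy\|\le\|x\|\|y\|$. A net $(x_\alpha)$ in $E$ $mw$-converges to $x$ ($x_\alpha\xrightarrow{mw}x$) if $|x_\alpha-x|u\to0$ weakly for every $u\in E_+$. *)

(* Defs.v *)
From HB Require Import structures.
From mathcomp Require Import all_boot all_order all_algebra.
From mathcomp Require Import all_classical all_reals all_analysis.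
Set Implicit Arguments. Unset Strict Implicit. Unset Printing Implicit Defensive.
Import Order.TTheory GRing.Theory Num.Theory.
Import numFieldNormedType.Exports.
Local Open Scope ring_scope.
Local Open Scope classical_set_scope.

Record vector_lattice (R : realType) (E : lmodType R) := VectorLattice {
  vle : E -> E -> Prop;
  vmeet : E -> E -> E;
  vjoin : E -> E -> E;
  vle_refl : forall x, vle x x;
  vle_trans : forall x y z, vle x y -> vle y z -> vle x z;
  vle_anti : forall x y, vle x y -> vle y x -> x = y;
  vle_add : forall x y z, vle x y -> vle (x + z) (y + z);
  vle_scale : forall (a : R) x y, 0 <= a -> vle x y -> vle (a *: x) (a *: y);
  vmeet_lb1 : forall x y, vle (vmeet x y) x;
  vmeet_lb2 : forall x y, vle (vmeet x y) y;
  vmeet_glb : forall x y z, vle z x -> vle z y -> vle z (vmeet x y);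
  vjoin_ub1 : forall x y, vle x (vjoin x y);
  vjoin_ub2 : forall x y, vle y (vjoin x y);
  vjoin_lub : forall x y z, vle x z -> vle y z -> vle (vjoin x y) z;
  varchimedean : forall x y, vle 0 x ->
    (forall n : nat, vle (n%:R *: x) y) -> x = 0
}.

Definition vabs (R : realType) (E : lmodType R) (L : vector_lattice E) (x : E) : E :=
  vjoin L x (- x).

Record banach_f_algebra (R : realType) (E : completeNormedModType R) :=
  BanachFAlgebra {
  bf_lattice :> vector_lattice E;
  bf_lattice_norm : forall x y : E,
    vle bf_lattice (vabs bf_lattice x) (vabs bf_lattice y) -> `|x| <= `|y|;
  bf_mul : E -> E -> E;
  bf_mulA : forall x y z, bf_mul x (bf_mul y z) = bf_mul (bf_mul x y) z;
  bf_mulDl : forall x y z, bf_mul (x + y) z = bf_mul x z + bf_mul y z;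
  bf_mulDr : forall x y z, bf_mul x (y + z) = bf_mul x y + bf_mul x z;
  bf_mulZl : forall (a : R) x y, bf_mul (a *: x) y = a *: bf_mul x y;
  bf_mulZr : forall (a : R) x y, bf_mul x (a *: y) = a *: bf_mul x y;
  bf_mul_pos : forall x y, vle bf_lattice 0 x -> vle bf_lattice 0 y ->
    vle bf_lattice 0 (bf_mul x y);
  bf_f_prop : forall x y z, vmeet bf_lattice x y = 0 -> vle bf_lattice 0 z ->
    vmeet bf_lattice (bf_mul x z) y = 0 /\ vmeet bf_lattice (bf_mul z x) y = 0;
  bf_norm_mul : forall x y, `|bf_mul x y| <= `|x| * `|y|
}.

Definition weak_cvg (R : realType) (E : normedModType R) (y : nat -> E) (l : E) : Prop :=
  forall f : E -> R,
    (forall a b, f (a + b) = f a + f b) ->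
    (forall (c : R) a, f (c *: a) = c * f a) ->
    continuous f ->
    (fun n => f (y n)) @ \oo --> f l.

Definition mw_cvg (R : realType) (E : completeNormedModType R)
    (A : banach_f_algebra E) (x : nat -> E) (l : E) : Prop :=
  forall u : E, vle A 0 u ->
    weak_cvg (fun n => bf_mul A (vabs A (x n - l)) u) 0.

(* Main.v *)
Require Import Defs.
From HB Require Import structures.
From mathcomp Require Import all_boot all_order all_algebra.
From mathcomp Require Import all_classical all_reals all_analysis.
From mathcomp Require Import zify.
Import Order.TTheory GRing.Theory Num.Theory.
Import numFieldNormedType.Exports.
Local Open Scope ring_scope.

Section Aux.
Variables (R : realType) (E : lmodType R) (L : vector_lattice E).

Lemma vabs_ge0 (c : E) : vle L 0 (vabs L c).
Proof.
have h1 : vle L 0 (vabs L c - c).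
  have := vle_add (- c) (vjoin_ub1 L c (- c)); rewrite subrr; exact.
have h2 : vle L 0 (vabs L c + c).
  have := vle_add c (vjoin_ub2 L c (- c)); rewrite addNr; exact.
have h3 : vle L 0 ((vabs L c - c) + (vabs L c + c)).
  apply: vle_trans h2 _; have := vle_add (vabs L c + c) h1; rewrite add0r; exact.
have := vle_scale (a := 2^-1) (ltW _) h3.
rewrite scaler0 (_ : (vabs L c - c) + (vabs L c + c) = 2 *: vabs L c).
  by rewrite scalerA mulVf ?pnatr_eq0 // scale1r; apply; rewrite invr_gt0 ltr0n.
by rewrite scaler_nat mulr2n addrACA addNr addr0.
Qed.

Lemma vle_opp (a b : E) : vle L a b -> vle L (- b) (- a).
Proof.
move=> h; have := vle_add (- a - b) h.
by rewrite addrA subrr add0r addrCA subrr addr0.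
Qed.

Lemma mid_zero (a b c : E) : vle L a b -> vle L b c ->
  vmeet L (vabs L a) (vabs L b) = 0 -> vmeet L (vabs L b) (vabs L c) = 0 -> b = 0.
Proof.
move=> hab hbc m1 m2.
have bneg : vle L b 0.
  have : vle L (vjoin L b 0) (vmeet L (vabs L b) (vabs L c)).
    apply: vmeet_glb; apply: vjoin_lub; try exact: vabs_ge0.
      exact: vjoin_ub1.
    exact: vle_trans hbc (vjoin_ub1 _ _ _).
  rewrite m2 => h; exact: vle_trans (vjoin_ub1 _ _ _) h.
have bpos : vle L (- b) 0.
  have : vle L (vjoin L (- b) 0) (vmeet L (vabs L a) (vabs L b)).
    apply: vmeet_glb; apply: vjoin_lub; try exact: vabs_ge0.
      exact: vle_trans (vle_opp _ _ hab) (vjoin_ub2 _ _ _).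
    exact: vjoin_ub2.
  rewrite m1 => h; exact: vle_trans (vjoin_ub1 _ _ _) h.
apply: (vle_anti bneg).
have := vle_add b bpos; rewrite addNr add0r; exact.
Qed.

Lemma vabs0 : vabs L 0 = 0.
Proof.
rewrite /vabs oppr0; apply: vle_anti.
  by apply: vjoin_lub; apply: vle_refl.
exact: vjoin_ub1.
Qed.

End Aux.

Theorem lemma2p3 (R : realType) (E : completeNormedModType R)
    (A : banach_f_algebra E) (x : nat -> E) :
  (forall n m : nat, n <> m -> vmeet A (vabs A (x n)) (vabs A (x m)) = 0) ->
  (forall n : nat, vle A (x n.+1) (x n)) ->
  mw_cvg A x 0.
Proof.
move=> disj dec.
have x0 : forall n, x n.+1 = 0.
  move=> n; apply: (@mid_zero _ _ A (x n.+2) _ (x n)) => //.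
    by apply: disj; lia.
  by apply: disj; lia.
move=> u u0 f fD fZ fc.
apply: cvg_near_cst; exists 1%N => // [[|n]] //= _.
rewrite x0 subrr vabs0.
have h := bf_mulZl A 0 0 u. rewrite scale0r in h. rewrite scale0r in h. by rewrite h.
Qed.
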